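(* Let $n\ge1$, $\rho\in(0,1)$, $\alpha\ge0$, and let $F:\mathbb{R}^n\to\mathbb{R}^n$ be $\rho$-Lipschitz with $F(x)=Gx+\xi(x)$, where $G\in\mathbb{R}^{n\times n}$ is symmetric positive semidefinite with $G\preccurlyeq\rho I$ and $\xi:\mathbb{R}^n\to\mathbb{R}^n$ is $\alpha$-Lipschitz. Let $C\ge1$, $k>2$ an integer, $x_0\in\mathbb{R}^n$, and let $x_e$ be the output of Constrained Anderson Acceleration started at $x_0$ with parameters $C,k$. Then $\|F(x_e)-x_e\|\le\hat\rho(C)\|F(x_0)-x_0\|$, where $\hat\rho(C)=\tilde\rho(C)+3\alpha kC$. Moreover, for every positive integer $M$, $$\hat\rho(C)\le\max_{i\in\{-1,\dots,M\}}\max\Big(\frac{C-C_i}{C_{i+1}-C_i}\rho_{i+1}+\frac{C_{i+1}-C}{C_{i+1}-C_i}\rho_i,\ \rho_*\Big)+3\alpha kC.$$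
   Context: $\|\cdot\|$ is the Euclidean norm; $\mathbb{R}_k[X]$ is real polynomials of degree at most $k$; $\|p\|_1$ is the sum of absolute values of coefficients of $p$, and $\|c\|_1=\sum_i|c_i|$. Constrained Anderson Acceleration: set $x_{i+1}=F(x_i)$ for $i=0,\dots,k$; $R=[x_0-x_1,\dots,x_k-x_{k+1}]$; $\tilde c\in\arg\min\{\|Rc\|:\mathbf 1^Tc=1,\ \|c\|_1\le C\}$; output $x_e=\sum_{i=0}^k\tilde c_ix_i$. $\tilde\rho(C)=\min\{\max_{x\in[0,\rho]}|p(x)|:p\in\mathbb{R}_k[X],\ p(1)=1,\ \|p\|_1\le C\}$. $T_k$ is the first-kind Chebyshev polynomial of degree $k$; for $\varepsilon\ge0$, $p_\varepsilon(X)=T_k\big(2\frac{X+\varepsilon}{\rho+\varepsilon}-1\big)/\big|T_k\big(2\frac{1+\varepsilon}{\rho+\varepsilon}-1\big)\big|$; $C_*=\|p_0\|_1$; $\rho_*=\frac{2\beta^k}{1+\beta^{2k}}$ with $\beta=\frac{1-\sqrt{1-\rho}}{1+\sqrt{1-\rho}}$. Given $M$: $\varepsilon_i=\rho/2^{i-1}$, $C_i=\|p_{\varepsilon_i}\|_1$ and $\rho_i=\frac{2\beta_i^k}{1+\beta_i^{2k}}$ with $\beta_i=\frac{1-\sqrt{1-\frac{\rho+\varepsilon_i}{1+\varepsilon_i}}}{1+\sqrt{1-\frac{\rho+\varepsilon_i}{1+\varepsilon_i}}}$ for $i=1,\dots,M$; $C_{-1}=1$, $\rho_{-1}=\rho^k$;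 $C_0=\frac{2+\rho^k}{2-\rho^k}$, $\rho_0=\frac{\rho^k}{2-\rho^k}$; $C_{M+1}=C_*$, $\rho_{M+1}=\rho_*$. *)

(* Defs.v *)
From HB Require Import structures.
From mathcomp Require Import all_boot all_order all_algebra.
From mathcomp Require Import boolp classical_sets reals.
Set Implicit Arguments. Unset Strict Implicit. Unset Printing Implicit Defensive.
Import Order.TTheory GRing.Theory Num.Theory.
Local Open Scope ring_scope.
Local Open Scope classical_set_scope.

Section Defs.
Variable R : realType.

Definition enorm (n : nat) (v : 'cV[R]_n) : R := Num.sqrt (\sum_(i < n) v i 0 ^+ 2).

Definition lipschitz (n : nat) (L : R) (f : 'cV[R]_n -> 'cV[R]_n) : Prop :=
  forall x y, enorm (f x - f y) <= L * enorm (x - y).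

Definition qform (n : nat) (A : 'M[R]_n) (v : 'cV[R]_n) : R := ((v^T *m A *m v) 0 0).

Definition symmetric_mx (n : nat) (A : 'M[R]_n) : Prop := A^T = A.
Definition psd (n : nat) (A : 'M[R]_n) : Prop := forall v, 0 <= qform A v.
Definition loewner_le (n : nat) (A B : 'M[R]_n) : Prop := psd (B - A).

Definition caa_iter (n : nat) (F : 'cV[R]_n -> 'cV[R]_n) (x0 : 'cV[R]_n) (i : nat) :=
  iter i F x0.

Definition caa_resmx (n k : nat) (F : 'cV[R]_n -> 'cV[R]_n) (x0 : 'cV[R]_n)
  : 'M[R]_(n, k.+1) :=
  \matrix_(r < n, j < k.+1) (caa_iter F x0 j - caa_iter F x0 j.+1) r 0.

Definition l1vec (m : nat) (c : 'cV[R]_m) : R := \sum_(i < m) `|c i 0|.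

Definition caa_feasible (k : nat) (C : R) (c : 'cV[R]_k.+1) : Prop :=
  \sum_(i < k.+1) c i 0 = 1 /\ l1vec c <= C.

Definition caa_argmin (n k : nat) (F : 'cV[R]_n -> 'cV[R]_n) (x0 : 'cV[R]_n)
  (C : R) (c : 'cV[R]_k.+1) : Prop :=
  caa_feasible C c /\
  forall c', caa_feasible C c' ->
    enorm (caa_resmx k F x0 *m c) <= enorm (caa_resmx k F x0 *m c').

Definition caa_output (n k : nat) (F : 'cV[R]_n -> 'cV[R]_n) (x0 : 'cV[R]_n)
  (c : 'cV[R]_k.+1) : 'cV[R]_n :=
  \sum_(i < k.+1) c i 0 *: caa_iter F x0 i.

Definition l1poly (p : {poly R}) : R := \sum_(i < size p) `|p`_i|.

(* max_{x in [0,rho]} |p(x)| (attained, hence the supremum) *)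
Definition supnorm_on (rho : R) (p : {poly R}) : R :=
  sup [set y | exists x : R, 0 <= x <= rho /\ y = `|p.[x]|].

Definition rho_tilde (rho : R) (k : nat) (C : R) : R :=
  inf [set y | exists p : {poly R},
          [/\ (size p <= k.+1)%N, p.[1] = 1, l1poly p <= C & y = supnorm_on rho p]].

(* Chebyshev polynomials of the first kind: T_0 = 1, T_1 = X,
   T_{m+2} = 2 X T_{m+1} - T_m *)
Fixpoint cheb_pair (m : nat) : {poly R} * {poly R} :=
  match m with
  | 0 => (1, 'X)
  | m'.+1 => let: (a, b) := cheb_pair m' in (b, 'X * b *+ 2 - a)
  end.
Definition cheb (m : nat) : {poly R} := (cheb_pair m).1.

Definition p_eps (rho : R) (k : nat) (eps : R) : {poly R} :=
  (`|(cheb k).[2 * (1 + eps) / (rho + eps) - 1]|)^-1 *: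
    (cheb k \Po ((2 / (rho + eps)) *: ('X + eps%:P) - 1)).

Definition beta_of (r : R) : R := (1 - Num.sqrt (1 - r)) / (1 + Num.sqrt (1 - r)).
Definition rate_of (k : nat) (b : R) : R := 2 * b ^+ k / (1 + b ^+ (2 * k)).

Definition C_star (rho : R) (k : nat) : R := l1poly (p_eps rho k 0).
Definition rho_star (rho : R) (k : nat) : R := rate_of k (beta_of rho).

Definition eps_i (rho : R) (i : nat) : R := rho / 2 ^+ i.-1.

(* Shifted indexing: Cs rho k M j = C_{j-1}, for j = 0, ..., M+2
   (i.e. C_{-1}, C_0, C_1, ..., C_M, C_{M+1}). Same for rhos. *)
Definition Cs (rho : R) (k M j : nat) : R :=
  if j == 0%N then 1
  else if j == 1%N then (2 + rho ^+ k) / (2 - rho ^+ k)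
  else if (j <= M.+1)%N then l1poly (p_eps rho k (eps_i rho j.-1))
  else C_star rho k.

Definition rhos (rho : R) (k M j : nat) : R :=
  if j == 0%N then rho ^+ k
  else if j == 1%N then rho ^+ k / (2 - rho ^+ k)
  else if (j <= M.+1)%N then
    rate_of k (beta_of ((rho + eps_i rho j.-1) / (1 + eps_i rho j.-1)))
  else rho_star rho k.

(* the affine piece indexed by i = j-1 in {-1,...,M}, evaluated at C *)
Definition interp (rho : R) (k M j : nat) (C : R) : R :=
  (C - Cs rho k M j) / (Cs rho k M j.+1 - Cs rho k M j) * rhos rho k M j.+1
  + (Cs rho k M j.+1 - C) / (Cs rho k M j.+1 - Cs rho k M j) * rhos rho k M j.

(* max_{i in {-1..M}} max(interp_i(C), rho_star); folding with rho_star as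
   initial value does not change the max since every term is >= rho_star. *)
Definition interp_bound (rho : R) (k M : nat) (C : R) : R :=
  \big[Num.max/rho_star rho k]_(j < M.+2) Num.max (interp rho k M j C) (rho_star rho k).

End Defs.

(* Main.v *)
Require Import Defs.
From HB Require Import structures.
From mathcomp Require Import all_boot all_order all_algebra.
From mathcomp Require Import boolp classical_sets reals.
From mathcomp Require Import complex.
From mathcomp Require Import ring lra zify.
Set Implicit Arguments. Unset Strict Implicit. Unset Printing Implicit Defensive.
Import Order.TTheory GRing.Theory Num.Theory.
Local Open Scope ring_scope.
Local Open Scope sesquilinear_scope.
Local Open Scope classical_set_scope.

Definition papp (K : nzRingType) (n : nat) (p : {poly K}) (G : 'M[K]_n) (v : 'cV[K]_n) :=
  \sum_(i < size p) p`_i *: iter i (mulmx G) v.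

Section Gen.
Variable CC : numClosedFieldType.
Definition csq' (n : nat) (z : 'cV[CC]_n) : CC := \sum_(i < n) (z i 0)^* * z i 0.

Lemma csq_mx' n (z : 'cV[CC]_n) : csq' z = ((z^t* *m z) 0 0).
Proof. rewrite /csq' mxE; apply: eq_bigr => i _; by rewrite !mxE. Qed.

Variable n : nat.
Variables (P : 'M[CC]_n) (d : 'rV[CC]_n).
Hypothesis PU : P *m P^t* = 1%:M.
Hypothesis PU' : P^t* *m P = 1%:M.

Lemma csq_unit (U : 'M[CC]_n) (y : 'cV[CC]_n) : U^t* *m U = 1%:M -> csq' (U *m y) = csq' y.
Proof.
move=> HU; rewrite !csq_mx' trmx_mul map_mxM.
by rewrite mulmxA -(mulmxA _ _ U) HU mulmx1.
Qed.

Lemma iter_diag i (y : 'cV[CC]_n) :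
  iter i (mulmx (diag_mx d)) y = \matrix_(j, l) (d 0 j ^+ i * y j l).
Proof.
elim: i => [|i IH] /=; first by apply/matrixP => j l; rewrite !mxE expr0 mul1r.
rewrite IH mul_diag_mx; apply/matrixP => j l; rewrite !mxE exprS mulrA //.
Qed.

Lemma iter_spec (G : 'M[CC]_n) i (w : 'cV[CC]_n) :
  G = P^t* *m diag_mx d *m P ->
  iter i (mulmx G) w = P^t* *m iter i (mulmx (diag_mx d)) (P *m w).
Proof.
move=> HG; elim: i => [|i IH] /=.
  by rewrite mulmxA PU' mul1mx.
rewrite IH HG !mulmxA -(mulmxA _ P) PU mulmx1 -!mulmxA //.
Qed.

Lemma papp_spec (G : 'M[CC]_n) q (w : 'cV[CC]_n) :
  G = P^t* *m diag_mx d *m P ->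
  papp q G w = P^t* *m \matrix_(j, l) (q.[d 0 j] * (P *m w) j l).
Proof.
move=> HG; rewrite /papp.
under eq_bigr => i _ do rewrite (iter_spec _ _ HG) iter_diag.
rewrite -[RHS]/(P^t* *m _).
transitivity (P^t* *m \sum_(i < size q) q`_i *: \matrix_(j, l) (d 0 j ^+ i * (P *m w) j l)).
  by rewrite mulmx_sumr; apply: eq_bigr => i _; rewrite scalemxAr.
congr (_ *m _); apply/matrixP => j l; rewrite summxE !mxE horner_coef mulr_suml.
by apply: eq_bigr => i _; rewrite !mxE mulrA.
Qed.

Lemma csq_diag (a : 'I_n -> CC) (m : CC) (y : 'cV[CC]_n) :
  0 <= m -> (forall j, `|a j| <= m) ->
  csq' (\matrix_(j, l) (a j * y j l)) <= m ^+ 2 * csq' y.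
Proof.
move=> m0 Ha; rewrite /csq' mulr_sumr; apply: ler_sum => j _.
rewrite !mxE rmorphM /= mulrACA [(a j)^* * _]mulrC -normCK [_^* * _]mulrC -normCK.
apply: ler_wpM2r; first exact: exprn_ge0.
by rewrite lerXn2r ?nnegrE.
Qed.
End Gen.

Section PartB.
Variable R : realType.
Local Notation C := (R[i]).
Local Notation toC := (real_complex R).


Definition sqv (n : nat) (v : 'cV[R]_n) : R := \sum_(i < n) v i 0 ^+ 2.

Lemma toC_real (x : R) : (toC x) \is Num.real.
Proof. by rewrite complex_real. Qed.

Lemma toC_conj (x : R) : (toC x)^* = toC x.
Proof. by rewrite conj_Creal // toC_real. Qed.

Lemma map_iter n (G : 'M[R]_n) (v : 'cV[R]_n) i :
  map_mx toC (iter i (mulmx G) v) = iter i (mulmx (map_mx toC G)) (map_mx toC v).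
Proof. by elim: i => //= i IH; rewrite map_mxM IH. Qed.

Lemma map_papp n (G : 'M[R]_n) (p : {poly R}) (v : 'cV[R]_n) :
  map_mx toC (papp p G v) = papp (map_poly toC p) (map_mx toC G) (map_mx toC v).
Proof.
rewrite /papp size_map_poly; apply/matrixP => r c.
rewrite !mxE !summxE rmorph_sum; apply: eq_bigr => i _.
by rewrite !mxE rmorphM /= -map_iter coef_map /= mxE.
Qed.

Lemma csq_toC n (v : 'cV[R]_n) : csq' (map_mx toC v) = toC (sqv v).
Proof.
rewrite /csq' /sqv rmorph_sum; apply: eq_bigr => i _.
by rewrite !mxE toC_conj rmorphXn /= expr2.
Qed.

End PartB.

Section B3.
Variable R : realType.
Local Notation C := (R[i]).
Local Notation toC := (real_complex R).

Lemma Re_sum (I : Type) (r : seq I) (Pr : pred I) (f : I -> C) :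
  complex.Re (\sum_(i <- r | Pr i) f i) = \sum_(i <- r | Pr i) complex.Re (f i).
Proof. by apply: (big_morph (fun x : C => complex.Re x)) => // -[a b] [c e]. Qed.

Lemma Re_toCl (x : R) (z : C) : complex.Re (toC x * z) = x * complex.Re z.
Proof. by case: z => a b /=; rewrite mul0r subr0. Qed.

Lemma Re_toCr (x : R) (z : C) : complex.Re (z * toC x) = complex.Re z * x.
Proof. by case: z => a b /=; rewrite mulr0 subr0. Qed.

Lemma Im_sum (I : Type) (r : seq I) (Pr : pred I) (f : I -> C) :
  complex.Im (\sum_(i <- r | Pr i) f i) = \sum_(i <- r | Pr i) complex.Im (f i).
Proof. by apply: (big_morph (fun x : C => complex.Im x)) => // -[a b] [c e]. Qed.

Lemma Im_toCl (x : R) (z : C) : complex.Im (toC x * z) = x * complex.Im z.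
Proof. by case: z => a b /=; rewrite mul0r addr0. Qed.

Lemma Im_toCr (x : R) (z : C) : complex.Im (z * toC x) = complex.Im z * x.
Proof. by case: z => a b /=; rewrite mulr0 add0r. Qed.

Lemma qform_sq n (a : 'cV[R]_n) : (a^T *m a) 0 0 = \sum_(k < n) a k 0 ^+ 2.
Proof. by rewrite mxE; apply: eq_bigr => k _; rewrite !mxE expr2. Qed.

Lemma eig_range n (G : 'M[R]_n) rho (P : 'M[C]_n) (d : 'rV[C]_n) j :
  psd G -> loewner_le G rho%:M -> P *m P^t* = 1%:M ->
  map_mx toC G = P^t* *m diag_mx d *m P -> d 0 j \is Num.real ->
  exists t, d 0 j = toC t /\ 0 <= t <= rho.
Proof.
move=> psdG lGr PU HG /complex_realP [t dt]; exists t; split => //.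
have E : map_mx toC G *m P^t* = P^t* *m diag_mx d.
  by rewrite HG -[_ *m P *m _]mulmxA PU mulmx1.
have N1 : \sum_(k < n) ((P^t*) k j)^* * (P^t*) k j = 1.
  have := congr1 (fun M : 'M[C]_n => M j j) PU; rewrite /= !mxE eqxx mulr1n => <-.
  by apply: eq_bigr => k _; rewrite !mxE conjCK.
move: N1 E; move: (P^t*) => Q N1 E.
pose a : 'cV[R]_n := \matrix_(k, l) complex.Re (Q k j).
pose b : 'cV[R]_n := \matrix_(k, l) complex.Im (Q k j).
have Ga : G *m a = t *: a.
  apply/matrixP => r l; have := congr1 (fun M : 'M[C]_n => complex.Re (M r j)) E.
  rewrite /= mul_mx_diag !mxE Re_sum dt Re_toCr mulrC => <-.
  by apply: eq_bigr => k _; rewrite !mxE Re_toCl.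
have Gb : G *m b = t *: b.
  apply/matrixP => r l; have := congr1 (fun M : 'M[C]_n => complex.Im (M r j)) E.
  rewrite /= mul_mx_diag !mxE Im_sum dt Im_toCr mulrC => <-.
  by apply: eq_bigr => k _; rewrite !mxE Im_toCl.
have S1 : (a^T *m a) 0 0 + (b^T *m b) 0 0 = 1.
  apply: (@complexI R); rewrite rmorph1 -N1 !qform_sq -big_split rmorph_sum /=.
  apply: eq_bigr => k _; rewrite !mxE mulrC -normCK -add_Re2_Im2 //.
have QF (v : 'cV[R]_n) (s : R) : G *m v = s *: v ->
    qform G v = s * (v^T *m v) 0 0 /\ qform (rho%:M - G) v = (rho - s) * (v^T *m v) 0 0.
  move=> Gv; rewrite /qform -!mulmxA Gv mulmxBl mul_scalar_mx Gv -scalerBl.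
  by rewrite -!scalemxAr !mxE.
have [qa qa'] := QF a t Ga; have [qb qb'] := QF b t Gb.
have := psdG a; have := psdG b; have := lGr a; have := lGr b.
rewrite qa qa' qb qb' => h1 h2 h3 h4.
have e1 : t = t * (a^T *m a) 0 0 + t * (b^T *m b) 0 0 by rewrite -mulrDr S1 mulr1.
have e2 : rho - t = (rho - t) * (a^T *m a) 0 0 + (rho - t) * (b^T *m b) 0 0.
  by rewrite -mulrDr S1 mulr1.
apply/andP; split; first by rewrite e1 addr_ge0.
by rewrite -subr_ge0 e2 addr_ge0.
Qed.
End B3.

Section Spec.
Variable R : realType.
Local Notation C := (R[i]).
Local Notation toC := (real_complex R).

Lemma normC_toC (x : R) : `|toC x| = toC `|x|.
Proof. by rewrite normc_def /= expr0n addr0 sqrtr_sqr. Qed.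


Lemma spec_bound n (G : 'M[R]_n) rho (p : {poly R}) m (v : 'cV[R]_n) :
  symmetric_mx G -> psd G -> loewner_le G rho%:M -> 0 <= m ->
  (forall x, 0 <= x <= rho -> `|p.[x]| <= m) ->
  sqv (papp p G v) <= m ^+ 2 * sqv v.
Proof.
move=> sG psdG lGr m0 Hp.
set Gc := map_mx toC G.
have Hh : Gc \is hermsymmx.
  apply: realsym_hermsym.
    apply/is_hermitianmxP; apply/matrixP => i j; rewrite !mxE expr0 mul1r.
    by rewrite -{1}sG mxE.
  by apply/mxOverP => i j; rewrite mxE toC_real.
have /orthomx_spectralP HG := hermitian_normalmx Hh.
have PUn := spectral_unitarymx Gc.
move: HG; rewrite invmx_unitary //.
have /unitarymxP PU := PUn.
have PU' := mulmx1C PU.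
have dreal := hermitian_spectral_diag_real Hh.
move: PU PU' dreal; set P := spectralmx Gc; set d := spectral_diag Gc => PU PU' dreal HG.
rewrite -lecR rmorphM rmorphXn /= -!csq_toC map_papp -/Gc (papp_spec PU PU' _ _ HG).
rewrite csq_unit; last by rewrite trmxCK.
rewrite -(csq_unit (map_mx toC v) PU').
apply: csq_diag; first by rewrite ler0c.
move=> j.
have [t [dt /Hp ht]] := @eig_range _ _ _ _ _ _ j psdG lGr PU HG (mxOverP dreal 0 j).
by rewrite dt horner_map normC_toC lecR.
Qed.
End Spec.

Section PartA.
Variable R : realType.
Variable n : nat.
Implicit Types u v : 'cV[R]_n.

Definition sqv' v : R := \sum_(i < n) v i 0 ^+ 2.
Definition dotv u v : R := \sum_(i < n) u i 0 * v i 0.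

Lemma sqv_ge0 v : 0 <= sqv' v.
Proof. by apply: sumr_ge0 => i _; rewrite sqr_ge0. Qed.

Lemma enormE v : enorm v = Num.sqrt (sqv' v).
Proof. by []. Qed.

Lemma enorm_ge0 v : 0 <= enorm v.
Proof. exact: sqrtr_ge0. Qed.

Lemma sqv_enorm v : sqv' v = enorm v ^+ 2.
Proof. by rewrite enormE sqr_sqrtr // sqv_ge0. Qed.

Lemma lagrange u v : 2 * (sqv' u * sqv' v - dotv u v ^+ 2) =
  \sum_(i < n) \sum_(j < n) (u i 0 * v j 0 - u j 0 * v i 0) ^+ 2.
Proof.
have e1 : sqv' u * sqv' v = \sum_(i < n) \sum_(j < n) u i 0 ^+ 2 * v j 0 ^+ 2.
  by rewrite mulr_suml; apply: eq_bigr => i _; rewrite mulr_sumr.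
have e2 : sqv' u * sqv' v = \sum_(i < n) \sum_(j < n) u j 0 ^+ 2 * v i 0 ^+ 2.
  rewrite mulrC mulr_suml; apply: eq_bigr => i _; rewrite mulr_sumr.
  by apply: eq_bigr => j _; rewrite mulrC.
have e3 : dotv u v ^+ 2 = \sum_(i < n) \sum_(j < n) (u i 0 * v i 0) * (u j 0 * v j 0).
  by rewrite expr2 mulr_suml; apply: eq_bigr => i _; rewrite mulr_sumr.
transitivity (\sum_(i < n) \sum_(j < n) (u i 0 ^+ 2 * v j 0 ^+ 2 + u j 0 ^+ 2 * v i 0 ^+ 2
    - ((u i 0 * v i 0) * (u j 0 * v j 0) + (u i 0 * v i 0) * (u j 0 * v j 0)))).
  under eq_bigr => i _ do rewrite sumrB !big_split /=.
  rewrite sumrB !big_split /= -e1 -e2 -e3; ring.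
by apply: eq_bigr => i _; apply: eq_bigr => j _; ring.
Qed.

Lemma cauchy_schwarz u v : dotv u v <= enorm u * enorm v.
Proof.
have h : dotv u v ^+ 2 <= sqv' u * sqv' v.
  rewrite -subr_ge0 -(pmulr_rge0 _ (ltr0Sn _ 1)) lagrange.
  by apply: sumr_ge0 => i _; apply: sumr_ge0 => j _; rewrite sqr_ge0.
rewrite enormE enormE -sqrtrM ?sqv_ge0 //.
apply: (le_trans (ler_norm _)); rewrite -sqrtr_sqr.
by rewrite ler_sqrt // mulr_ge0 // sqv_ge0.
Qed.

Lemma sqvD u v : sqv' (u + v) = sqv' u + 2 * dotv u v + sqv' v.
Proof.
rewrite /sqv' /dotv mulr_sumr -!big_split /=; apply: eq_bigr => i _.
by rewrite mxE; ring.
Qed.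

Lemma enormD u v : enorm (u + v) <= enorm u + enorm v.
Proof.
rewrite {1}enormE -(ger0_norm (addr_ge0 (enorm_ge0 u) (enorm_ge0 v))) -sqrtr_sqr.
rewrite ler_sqrt ?sqr_ge0 // sqvD sqrrD !sqv_enorm.
have := cauchy_schwarz u v; lra.
Qed.

Lemma enormZ a v : enorm (a *: v) = `|a| * enorm v.
Proof.
rewrite !enormE -sqrtr_sqr -sqrtrM ?sqr_ge0 //; congr Num.sqrt.
rewrite /sqv' mulr_sumr; apply: eq_bigr => i _; by rewrite mxE exprMn.
Qed.

Lemma enormN v : enorm (- v) = enorm v.
Proof. by rewrite -scaleN1r enormZ normrN normr1 mul1r. Qed.

Lemma enormB u v : enorm (u - v) = enorm (v - u).
Proof. by rewrite -enormN opprB. Qed.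

Lemma enorm0 : enorm (0 : 'cV[R]_n) = 0.
Proof. by rewrite enormE /sqv' big1 ?sqrtr0 // => i _; rewrite mxE expr0n. Qed.

Lemma enorm_sum (I : Type) (r : seq I) (P : pred I) (f : I -> 'cV[R]_n) :
  enorm (\sum_(i <- r | P i) f i) <= \sum_(i <- r | P i) enorm (f i).
Proof.
elim/big_rec2: _ => [|i y1 y2 _ IH]; first by rewrite enorm0.
by apply: (le_trans (enormD _ _)); rewrite lerD2l.
Qed.

End PartA.


Section Supn.
Variable R : realType.

Lemma sum_coef_ext (V : zmodType) (p : {poly R}) N (f : nat -> R -> V) :
  (size p <= N)%N -> (forall i, f i 0 = 0) ->
  \sum_(i < N) f i p`_i = \sum_(i < size p) f i p`_i.
Proof.
move=> hN f0; rewrite [RHS](big_ord_widen N (fun i => f i p`_i) hN) [RHS]big_mkcond /=.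
apply: eq_bigr => i _; case: ifP => // /negbT; rewrite -leqNgt => h.
by rewrite nth_default.
Qed.

Lemma horner_bound (p : {poly R}) x : `|x| <= 1 -> `|p.[x]| <= l1poly p.
Proof.
move=> hx; rewrite horner_coef /l1poly; apply: (le_trans (ler_norm_sum _ _ _)).
apply: ler_sum => i _; rewrite normrM normrX.
by apply: ler_piMr => //; apply: exprn_ile1.
Qed.

Lemma l1poly_ge0 (p : {poly R}) : 0 <= l1poly p.
Proof. by apply: sumr_ge0 => i _. Qed.

Variable rho : R.
Hypothesis rho0 : 0 <= rho.
Hypothesis rho1 : rho <= 1.

Lemma supnorm_ub (p : {poly R}) x : 0 <= x <= rho -> `|p.[x]| <= supnorm_on rho p.
Proof.
move=> hx; apply: sup_upper_bound; last by exists x.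
split; first by exists `|p.[0]|, 0; rewrite lexx rho0.
exists (l1poly p) => _ [y [/andP [y0 yr] ->]].
apply: horner_bound; rewrite ger0_norm //; exact: le_trans yr rho1.
Qed.

Lemma supnorm_ge0 (p : {poly R}) : 0 <= supnorm_on rho p.
Proof. apply: le_trans (supnorm_ub p (x := 0) _) => //; by rewrite lexx rho0. Qed.

Lemma supnorm_le (p : {poly R}) b : (forall x, 0 <= x <= rho -> `|p.[x]| <= b) ->
  supnorm_on rho p <= b.
Proof.
move=> hb; apply: ge_sup; first by exists `|p.[0]|, 0; rewrite lexx rho0.
by move=> _ [y [hy ->]]; apply: hb.
Qed.

End Supn.


Section P1.
Variable R : realType.
Variable n : nat.
Variables (rho alpha : R) (F : 'cV[R]_n -> 'cV[R]_n) (G : 'M[R]_n) (xi : 'cV[R]_n -> 'cV[R]_n).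
Variables (k : nat) (x0 : 'cV[R]_n).
Hypothesis rho0 : 0 <= rho.
Hypothesis rho1 : rho <= 1.
Hypothesis alpha0 : 0 <= alpha.
Hypothesis FL : lipschitz rho F.
Hypothesis FG : forall x, F x = G *m x + xi x.
Hypothesis Gs : symmetric_mx G.
Hypothesis Gp : psd G.
Hypothesis Gl : loewner_le G rho%:M.
Hypothesis xiL : lipschitz alpha xi.

Local Notation x := (caa_iter F x0).
Local Notation dd i := (x i - x i.+1).
Local Notation d0 := (enorm (x 0 - x 1)).

Lemma spec_enorm (p : {poly R}) m (v : 'cV[R]_n) : 0 <= m ->
  (forall y, 0 <= y <= rho -> `|p.[y]| <= m) -> enorm (papp p G v) <= m * enorm v.
Proof.
move=> m0 hp; have := spec_bound v Gs Gp Gl m0 hp.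
rewrite !enormE -[sqv (papp p G v)]/(sqv' _) -[sqv v]/(sqv' _) => h.
rewrite -(ger0_norm m0) -sqrtr_sqr -sqrtrM ?sqr_ge0 // ler_sqrt //.
by rewrite mulr_ge0 ?sqr_ge0 ?sqv_ge0.
Qed.

Lemma Gbound (v : 'cV[R]_n) : enorm (G *m v) <= rho * enorm v.
Proof.
have -> : G *m v = papp 'X G v.
  rewrite /papp size_polyX !big_ord_recr big_ord0 /= !coefX /= add0r scale0r add0r.
  by rewrite scale1r.
by apply: spec_enorm => // y /andP [y0 yr]; rewrite hornerX ger0_norm.
Qed.

Lemma dd_le i : enorm (dd i) <= d0.
Proof.
elim: i => // i IH; apply: le_trans IH.
have -> : dd i.+1 = F (x i) - F (x i.+1) by [].
apply: (le_trans (FL _ _)); apply: ler_piMl => //; exact: enorm_ge0.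
Qed.

Lemma xdev i : enorm (x i - x0) <= i%:R * d0.
Proof.
elim: i => [|i IH]; first by rewrite subrr enorm0 mul0r.
have -> : x i.+1 - x0 = (x i - x0) + - dd i by apply/matrixP => a b; rewrite !mxE; ring.
apply: (le_trans (enormD _ _)); rewrite enormN mulrSr mulrDl mul1r.
by apply: lerD => //; apply: dd_le.
Qed.

Definition err i := dd i - iter i (mulmx G) (dd 0).

Lemma err_le i : enorm (err i) <= i%:R * alpha * d0.
Proof.
elim: i => [|i IH]; first by rewrite /err /= subrr enorm0 !mul0r.
have -> : err i.+1 = G *m err i + (xi (x i) - xi (x i.+1)).
  rewrite /err.
  have -> : iter i.+1 (mulmx G) (dd 0) = G *m iter i (mulmx G) (dd 0) by [].
  have -> : x i.+1 - x i.+2 = F (x i) - F (x i.+1) by [].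
  rewrite (FG (x i)) (FG (x i.+1)) !mulmxBr; apply/matrixP => a b; rewrite !mxE; ring.
apply: (le_trans (enormD _ _)); rewrite mulrSr !mulrDl mul1r.
apply: lerD.
  apply: (le_trans (Gbound _)); apply: (le_trans _ IH); apply: ler_piMl => //.
  exact: enorm_ge0.
apply: (le_trans (xiL _ _)); apply: ler_wpM2l => //; apply: dd_le.
Qed.


Lemma resmxE (c : 'cV[R]_k.+1) :
  caa_resmx k F x0 *m c = \sum_(j < k.+1) c j 0 *: dd j.
Proof.
apply/matrixP => a b; rewrite !mxE summxE; apply: eq_bigr => j _.
by rewrite !mxE (ord1 b) mulrC.
Qed.

Lemma sum_const_scale (c : 'cV[R]_k.+1) (v : 'cV[R]_n) (f : 'I_k.+1 -> 'cV[R]_n) :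
  \sum_(j < k.+1) c j 0 = 1 ->
  \sum_(j < k.+1) c j 0 *: (f j - v) = \sum_(j < k.+1) c j 0 *: f j - v.
Proof.
move=> hc; under eq_bigr => j _ do rewrite scalerBr.
by rewrite sumrB -scaler_suml hc scale1r.
Qed.

Lemma step1 (c : 'cV[R]_k.+1) : \sum_(j < k.+1) c j 0 = 1 ->
  F (caa_output F x0 c) - caa_output F x0 c = - (caa_resmx k F x0 *m c) + (xi (caa_output F x0 c) - xi x0)
     - \sum_(j < k.+1) c j 0 *: (xi (x j) - xi x0).
Proof.
move=> hc; set xe := caa_output F x0 c; rewrite sum_const_scale // resmxE.
have h1 : \sum_(j < k.+1) c j 0 *: x j.+1 =
    G *m xe + \sum_(j < k.+1) c j 0 *: xi (x j).
  rewrite /xe /caa_output mulmx_sumr -big_split /=; apply: eq_bigr => j _.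

  by rewrite FG scalerDr scalemxAr.
have h2 : \sum_(j < k.+1) c j 0 *: dd j = xe - \sum_(j < k.+1) c j 0 *: x j.+1.
  by rewrite /xe /caa_output -sumrB; apply: eq_bigr => j _; rewrite scalerBr.
rewrite h2 h1 FG; clear h1 h2.
move: (G *m xe) (xi xe) (xi x0) (\sum_(j < k.+1) c j 0 *: xi (x j)) => A B D S.
clearbody xe.
by apply/matrixP => a b; rewrite !mxE; ring.
Qed.


Lemma sum_dev (c : 'cV[R]_k.+1) (f : 'I_k.+1 -> 'cV[R]_n) b :
  (forall j : 'I_k.+1, enorm (f j) <= b) ->
  enorm (\sum_(j < k.+1) c j 0 *: f j) <= l1vec c * b.
Proof.
move=> hb; apply: (le_trans (enorm_sum _ _ _)); rewrite /l1vec mulr_suml.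
by apply: ler_sum => j _; rewrite enormZ ler_wpM2l.
Qed.

Lemma l1vec_ge0 m (c : 'cV[R]_m) : 0 <= l1vec c.
Proof. by apply: sumr_ge0. Qed.

Lemma xdevk (j : 'I_k.+1) : enorm (x j - x0) <= k%:R * d0.
Proof.
apply: (le_trans (xdev j)); apply: ler_wpM2r; first exact: enorm_ge0.
by rewrite ler_nat -ltnS.
Qed.

Lemma errk (j : 'I_k.+1) : enorm (err j) <= k%:R * alpha * d0.
Proof.
apply: (le_trans (err_le j)); rewrite -!mulrA; apply: ler_wpM2r.
  by rewrite mulr_ge0 // enorm_ge0.
by rewrite ler_nat -ltnS.
Qed.

Lemma stepA (C : R) (c : 'cV[R]_k.+1) : caa_feasible C c ->
  enorm (F (caa_output F x0 c) - caa_output F x0 c) <= enorm (caa_resmx k F x0 *m c) + 2%:R * alpha * k%:R * C * d0.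
Proof.
move=> [hc hl]; rewrite (step1 hc); set xe := caa_output F x0 c.
have hkd : 0 <= k%:R * d0 by rewrite mulr_ge0 // enorm_ge0.
have e1 : enorm (xe - x0) <= C * (k%:R * d0).
  rewrite /xe /caa_output -(sum_const_scale x0 (fun j => x j) hc).
  apply: (le_trans (sum_dev _ (b := k%:R * d0) _)); first exact: xdevk.
  by apply: ler_wpM2r.
have e2 : enorm (\sum_(j < k.+1) c j 0 *: (xi (x j) - xi x0)) <= C * (alpha * (k%:R * d0)).
  apply: (le_trans (sum_dev _ (b := alpha * (k%:R * d0)) _)).
    move=> j; apply: (le_trans (xiL _ _)); apply: ler_wpM2l => //; exact: xdevk.
  by apply: ler_wpM2r => //; rewrite mulr_ge0.
have e3 : enorm (xi xe - xi x0) <= alpha * (C * (k%:R * d0)).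
  by apply: (le_trans (xiL _ _)); apply: ler_wpM2l.
apply: (le_trans (enormD _ _)); rewrite enormN.
apply: (le_trans (lerD (enormD _ _) (lexx _))); rewrite enormN.
have -> : 2%:R * alpha * k%:R * C * d0 = alpha * (C * (k%:R * d0)) + C * (alpha * (k%:R * d0)).
  ring.
rewrite -addrA; apply: lerD => //; exact: lerD.
Qed.

Lemma stepB (C : R) (c : 'cV[R]_k.+1) (p : {poly R}) : caa_argmin F x0 C c ->
  (size p <= k.+1)%N -> p.[1] = 1 -> l1poly p <= C ->
  enorm (caa_resmx k F x0 *m c) <= (supnorm_on rho p + alpha * k%:R * C) * d0.
Proof.
move=> [_ hmin] hs h1 hl.
pose c' : 'cV[R]_k.+1 := \col_j p`_j.
have hl' : l1vec c' = l1poly p.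
  rewrite /l1vec /l1poly -(sum_coef_ext (f := fun i a => `|a|) hs) ?normr0 //.
  by apply: eq_bigr => j _; rewrite mxE.
have hf : caa_feasible C c'.
  split; last by rewrite hl'.
  rewrite -h1 horner_coef -(sum_coef_ext (f := fun i a => a * 1 ^+ i) hs); last by move=> i; rewrite mul0r.
  by apply: eq_bigr => j _; rewrite mxE expr1n mulr1.
apply: (le_trans (hmin c' hf)); rewrite resmxE.
have -> : \sum_(j < k.+1) c' j 0 *: dd j =
    papp p G (dd 0) + \sum_(j < k.+1) c' j 0 *: err j.
  rewrite /papp -(sum_coef_ext (f := fun i a => a *: iter i (mulmx G) (dd 0)) hs); last first.
    by move=> i; rewrite scale0r.
  rewrite -big_split; apply: eq_bigr => j _; rewrite /= mxE -scalerDr /err /=.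
  by congr (_ *: _); apply/matrixP => a b; rewrite !mxE; ring.
apply: (le_trans (enormD _ _)); rewrite mulrDl; apply: lerD.
  apply: spec_enorm; first exact: supnorm_ge0.
  by move=> y hy; apply: supnorm_ub.
apply: (le_trans (sum_dev _ (b := k%:R * alpha * d0) _)); first exact: errk.
rewrite hl'; have -> : alpha * k%:R * C * d0 = C * (k%:R * alpha * d0) by ring.
by apply: ler_wpM2r => //; rewrite !mulr_ge0 // enorm_ge0.
Qed.


Lemma rt_set_nonempty (C : R) : 1 <= C -> exists y,
  [set y | exists p : {poly R},
    [/\ (size p <= k.+1)%N, p.[1] = 1, l1poly p <= C & y = supnorm_on rho p]] y.
Proof.
move=> hC; exists (supnorm_on rho 1), 1; split => //.
- by rewrite size_poly1.
- by rewrite hornerC.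
- by rewrite /l1poly size_poly1 big_ord1 coefC /= normr1.
Qed.

Lemma part1 (C : R) (c : 'cV[R]_k.+1) : 1 <= C -> caa_argmin F x0 C c ->
  enorm (F (caa_output F x0 c) - caa_output F x0 c) <=
  (rho_tilde rho k C + 3%:R * alpha * k%:R * C) * enorm (F x0 - x0).
Proof.
move=> hC hc.
have -> : enorm (F x0 - x0) = d0 by rewrite enormB.
set L := enorm _.
have H : forall y, [set y | exists p : {poly R},
    [/\ (size p <= k.+1)%N, p.[1] = 1, l1poly p <= C & y = supnorm_on rho p]] y ->
    L <= (y + 3%:R * alpha * k%:R * C) * d0.
  move=> _ [p [hs h1 hl ->]].
  apply: (le_trans (stepA hc.1)); apply: (le_trans (lerD (stepB hc hs h1 hl) (lexx _))).
  rewrite -!mulrDl ler_wpM2r ?enorm_ge0 //.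
  have -> : 3%:R * alpha * k%:R * C = alpha * k%:R * C + 2%:R * alpha * k%:R * C by ring.
  by rewrite addrA.
have [y Sy] := rt_set_nonempty hC.
have d00 := enorm_ge0 (x 0 - x 1).
rewrite le_eqVlt in d00; case/orP: d00 => [/eqP d0e|d0p].
  by apply: (le_trans (H y Sy)); rewrite -d0e !mulr0.
rewrite -ler_pdivrMr //.
suff : L / d0 - 3%:R * alpha * k%:R * C <= rho_tilde rho k C by lra.
apply: lb_le_inf; first by exists y.
move=> z Sz; have := H z Sz; rewrite -ler_pdivrMr // => h; lra.
Qed.

End P1.


Section Cheb.
Variable R : realType.

Lemma cheb_pairE m : cheb_pair R m = (cheb R m, cheb R m.+1).
Proof.
rewrite /cheb; elim: m => //= m ->; by [].
Qed.

Lemma cheb0 : cheb R 0 = 1. Proof. by []. Qed.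
Lemma cheb1 : cheb R 1 = 'X. Proof. by []. Qed.
Lemma chebSS m : cheb R m.+2 = 'X * cheb R m.+1 *+ 2 - cheb R m.
Proof. by rewrite {1}/cheb /= cheb_pairE. Qed.

Lemma cheb_size m : (size (cheb R m) <= m.+1)%N.
Proof.
suff : (size (cheb R m) <= m.+1)%N /\ (size (cheb R m.+1) <= m.+2)%N by case.
elim: m => [|m [IH0 IH]]; first by rewrite cheb0 cheb1 size_poly1 size_polyX.
split => //; rewrite chebSS.
have h1 : (size ('X * cheb R m.+1)%R <= m.+3)%N.
  apply: (leq_trans (size_polyMleq _ _)); rewrite size_polyX; lia.
have h2 : (size ('X * cheb R m.+1 *+ 2)%R <= m.+3)%N.
  by rewrite mulr2n; apply: (leq_trans (size_polyD _ _)); rewrite maxnn.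
apply: (leq_trans (size_polyD _ _)); rewrite size_polyN geq_max h2 /=.
by apply: (leq_trans IH0); apply: leqW; apply: leqW.
Qed.

Lemma cheb_horner_SS m y : (cheb R m.+2).[y] = 2 * y * (cheb R m.+1).[y] - (cheb R m).[y].
Proof. by rewrite chebSS hornerD hornerN hornerMn hornerM hornerX -mulr_natl mulrA. Qed.


Lemma cheb_h0 y : (cheb R 0).[y] = 1. Proof. by rewrite cheb0 hornerC. Qed.
Lemma cheb_h1 y : (cheb R 1).[y] = y. Proof. by rewrite cheb1 hornerX. Qed.

Lemma cheb_inv m y :
  (cheb R m).[y] ^+ 2 - 2 * y * (cheb R m).[y] * (cheb R m.+1).[y] + (cheb R m.+1).[y] ^+ 2
  = 1 - y ^+ 2.
Proof.
elim: m => [|m IH]; first by rewrite cheb_h0 cheb_h1; ring.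
rewrite cheb_horner_SS -IH; ring.
Qed.

Lemma cheb_pm1 m y : y ^+ 2 = 1 -> (cheb R m).[y] = y ^+ m.
Proof.
move=> hy.
suff : (cheb R m).[y] = y ^+ m /\ (cheb R m.+1).[y] = y ^+ m.+1 by case.
elim: m => [|m [IH0 IH1]]; first by rewrite cheb_h0 cheb_h1 expr0 expr1.
split => //; rewrite cheb_horner_SS IH0 IH1.
have h : y * y = 1 by rewrite -expr2.
rewrite !exprS; apply/eqP; rewrite -subr_eq0.
have -> : 2 * y * (y * y ^+ m) - y ^+ m - y * (y * y ^+ m) = (y * y - 1) * y ^+ m by ring.
by rewrite h subrr mul0r.
Qed.

Lemma cheb_bound m y : -1 <= y <= 1 -> `|(cheb R m).[y]| <= 1.
Proof.
move=> /andP [h1 h2].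
have [hy|hy] : y ^+ 2 < 1 \/ y ^+ 2 = 1.
  have : y ^+ 2 <= 1 by nra.
  by rewrite le_eqVlt => /orP [/eqP ->|->]; [right|left].
  have := cheb_inv m y.
  set a := (cheb R m).[y]; set b := (cheb R m.+1).[y] => h.
  have hs := sqr_ge0 (b - y * a).
  have ha : a ^+ 2 <= 1 by nra.
  rewrite ler_norml; apply/andP; split; nra.
rewrite cheb_pm1 // normrX.
have -> : `|y| = 1.
  have : `|y| ^+ 2 = 1 by rewrite real_normK ?num_real.
  have := normr_ge0 y; nra.
by rewrite expr1n.
Qed.

Lemma cheb_cosh m w v : w * v = 1 -> (cheb R m).[(w + v) / 2] = (w ^+ m + v ^+ m) / 2.
Proof.
move=> hwv.
suff : (cheb R m).[(w + v) / 2] = (w ^+ m + v ^+ m) / 2 /\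
       (cheb R m.+1).[(w + v) / 2] = (w ^+ m.+1 + v ^+ m.+1) / 2 by case.
elim: m => [|m [IH0 IH1]].
  rewrite cheb_h0 cheb_h1 !expr0 !expr1; split => //.
  have h2 : (2 : R) != 0 by apply/negP => /eqP; lra.
  by field.
split => //; rewrite cheb_horner_SS IH0 IH1.
have h2 : (2 : R) != 0 by apply/negP => /eqP; lra.
rewrite !exprS; apply/eqP; rewrite -subr_eq0.
have -> : 2 * ((w + v) / 2) * ((w * w ^+ m + v * v ^+ m) / 2) - (w ^+ m + v ^+ m) / 2
   - (w * (w * w ^+ m) + v * (v * v ^+ m)) / 2 = (w * v - 1) * (w ^+ m + v ^+ m) / 2.
  by field.
by rewrite hwv subrr !mul0r.
Qed.
End Cheb.


Section Peps.
Variable R : realType.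
Variables (rho eps : R) (k : nat).
Hypothesis rho0 : 0 < rho.
Hypothesis rho1 : rho < 1.
Hypothesis eps0 : 0 <= eps.

Ltac hyps := have := rho0; have := rho1; have := eps0; move=> ? ? ?.

Let a := rho + eps.
Let a0 : 0 < a. Proof. rewrite /a; hyps; lra. Qed.
Let r := (rho + eps) / (1 + eps).
Let r0 : 0 < r. Proof. hyps; rewrite /r divr_gt0 //; lra. Qed.
Let r1 : r < 1. Proof. hyps; rewrite /r ltr_pdivrMr; lra. Qed.
Let s := Num.sqrt (1 - r).
Let s0 : 0 <= s. Proof. exact: sqrtr_ge0. Qed.
Let s1 : s < 1.
Proof.
have := r0; move=> ?.
have : Num.sqrt (1 - r) < Num.sqrt 1 by rewrite ltr_sqrt; lra.
by rewrite sqrtr1.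
Qed.
Let s2 : s ^+ 2 = 1 - r. Proof. have := r1; move=> ?; by rewrite /s sqr_sqrtr //; lra. Qed.
Let b := (1 - s) / (1 + s).
Let b0 : 0 < b. Proof. have := s0; have := s1; move=> ? ?; rewrite /b divr_gt0 //; lra. Qed.
Let z := 2 * (1 + eps) / (rho + eps) - 1.

Ltac hyps2 := have := s0; have := s1; have := b0; have := r0; have := r1; move=> ? ? ? ? ?; hyps.

Lemma z_eq : z = (b^-1 + b) / 2.
Proof.
hyps2.
have e1 : 2 * (1 + eps) / (rho + eps) = 2 / r.
  rewrite /r invf_div mulrA //.
rewrite /z e1.
have hr : r = 1 - s ^+ 2 by rewrite s2; ring.
rewrite hr /b.
have h1 : 1 - s != 0 by apply/negP => /eqP; lra.
have h2 : 1 + s != 0 by apply/negP => /eqP; lra.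
have h3 : 1 - s ^+ 2 != 0 by rewrite -hr; apply/negP => /eqP; lra.
have h4 : (2 : R) != 0 by apply/negP => /eqP; lra.
field; by repeat (apply/andP; split).
Qed.

Lemma Tz : (cheb R k).[z] = ((b ^+ k)^-1 + b ^+ k) / 2.
Proof.
hyps2.
rewrite z_eq cheb_cosh ?exprVn //; rewrite mulVf //; apply/negP => /eqP; lra.
Qed.

Lemma Tz_pos : 0 < (cheb R k).[z].
Proof.
hyps2.
rewrite Tz; apply: divr_gt0; last lra.
have hb : 0 < b ^+ k by apply: exprn_gt0.
by apply: addr_gt0 => //; rewrite invr_gt0.
Qed.

Lemma Tz_rate : ((cheb R k).[z])^-1 = rate_of k (beta_of r).
Proof.
hyps2.
rewrite Tz /rate_of /beta_of -/s -/b mulnC exprM.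
have hb : 0 < b ^+ k by apply: exprn_gt0.
have h1 : b ^+ k != 0 by apply/negP => /eqP; lra.
have h2 : 1 + b ^+ k ^+ 2 != 0.
  have := sqr_ge0 (b ^+ k); move=> h; apply/negP => /eqP; lra.
have h4 : (2 : R) != 0 by apply/negP => /eqP; lra.
have h5 : (b ^+ k)^-1 + b ^+ k != 0.
  have : 0 < (b ^+ k)^-1 by rewrite invr_gt0.
  move=> h; apply/negP => /eqP; lra.
field; by repeat (apply/andP; split).
Qed.


Let q := (2 / (rho + eps)) *: ('X + eps%:P) - 1.

Lemma q_eval x : q.[x] = 2 / (rho + eps) * (x + eps) - 1.
Proof. by rewrite /q !hornerE. Qed.

Lemma peps_one : (p_eps rho k eps).[1] = 1.
Proof.
rewrite /p_eps hornerZ horner_comp -/q q_eval.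
have -> : 2 / (rho + eps) * (1 + eps) - 1 = z by rewrite /z mulrAC.
rewrite -/z ger0_norm; last exact: ltW Tz_pos.
by rewrite mulVf //; have := Tz_pos; move=> h; apply/negP => /eqP; lra.
Qed.

Lemma peps_bound x : 0 <= x <= rho -> `|(p_eps rho k eps).[x]| <= rate_of k (beta_of r).
Proof.
move=> /andP [x0 xr]; hyps.
rewrite /p_eps hornerZ horner_comp -/q q_eval -/z normrM normrV ?unitfE; last first.
  by rewrite normr_eq0; have := Tz_pos; move=> h; apply/negP => /eqP; lra.
rewrite normr_id (ger0_norm (ltW Tz_pos)) -Tz_rate.
apply: ler_piMr; first by rewrite invr_ge0 ltW // Tz_pos.
apply: cheb_bound.
have ha : 0 < rho + eps by lra.
have hu0 : 0 <= (x + eps) / (rho + eps) by rewrite divr_ge0 //; lra.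
have hu1 : (x + eps) / (rho + eps) <= 1 by rewrite ler_pdivrMr // mul1r; lra.
have -> : 2 / (rho + eps) * (x + eps) = 2 * ((x + eps) / (rho + eps)) by rewrite mulrAC mulrA.
apply/andP; split; lra.
Qed.

Lemma peps_size : (size (p_eps rho k eps) <= k.+1)%N.
Proof.
rewrite /p_eps; apply: (leq_trans (size_scale_leq _ _)).
apply: (leq_trans (size_comp_poly_leq _ _)).
have hq : (size q <= 2)%N.
  apply: (leq_trans (size_polyD _ _)); rewrite size_polyN size_poly1 geq_max andbT.
  by apply: (leq_trans (size_scale_leq _ _)); rewrite size_XaddC.
have hc := cheb_size R k.
rewrite -/q ltnS.
have h1 : ((size q).-1 <= 1)%N by lia.
have h2 : ((size (cheb R k)).-1 <= k)%N by lia.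
by apply: leq_trans (leq_mul h2 h1) _; rewrite muln1.
Qed.

End Peps.


Section L1.
Variable R : realType.

Lemma l1poly_ext (p : {poly R}) N : (size p <= N)%N -> l1poly p = \sum_(i < N) `|p`_i|.
Proof. move=> h; rewrite /l1poly (sum_coef_ext (f := fun i a => `|a|) h) //. by move=> i; rewrite normr0. Qed.

Lemma l1polyD (p q : {poly R}) : l1poly (p + q) <= l1poly p + l1poly q.
Proof.
set N := maxn (size p) (size q).
rewrite (@l1poly_ext (p + q) N) ?size_polyD // (@l1poly_ext p N) ?leq_maxl //.
rewrite (@l1poly_ext q N) ?leq_maxr // -big_split; apply: ler_sum => i _.
by rewrite coefD ler_normD.
Qed.

Lemma l1polyZ a (p : {poly R}) : l1poly (a *: p) = `|a| * l1poly p.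
Proof.
rewrite (@l1poly_ext (a *: p) (size p)) ?size_scale_leq // /l1poly mulr_sumr.
by apply: eq_bigr => i _; rewrite coefZ normrM.
Qed.

Lemma l1polyC a : l1poly (a%:P : {poly R}) = `|a|.
Proof.
rewrite (@l1poly_ext _ 1) ?size_polyC ?leq_b1 // big_ord1 coefC //.
Qed.

Lemma l1polyXn m : l1poly ('X^m : {poly R}) = 1.
Proof.
rewrite /l1poly size_polyXn big_ord_recr /= big1 ?add0r ?coefXn ?eqxx ?normr1 //.
by move=> i _; rewrite coefXn /= (ltn_eqF (ltn_ord i)) normr0.
Qed.

Definition Wit (rho : R) (k : nat) (C r : R) := exists p : {poly R},
  [/\ (size p <= k.+1)%N, p.[1] = 1, l1poly p <= C &
      forall x, 0 <= x <= rho -> `|p.[x]| <= r].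

Lemma Wit_mono rho k C C' r : C <= C' -> Wit rho k C r -> Wit rho k C' r.
Proof. by move=> h [p [h1 h2 h3 h4]]; exists p; split => //; apply: le_trans h. Qed.

Lemma Wit_conv rho k C1 C2 r1 r2 t : 0 <= t <= 1 ->
  Wit rho k C1 r1 -> Wit rho k C2 r2 ->
  Wit rho k ((1 - t) * C1 + t * C2) ((1 - t) * r1 + t * r2).
Proof.
move=> /andP [t0 t1] [p [p1 p2 p3 p4]] [q [q1 q2 q3 q4]].
have t0' : 0 <= 1 - t by lra.
exists ((1 - t) *: p + t *: q); split.
- apply: (leq_trans (size_polyD _ _)); rewrite geq_max.
  by rewrite (leq_trans (size_scale_leq _ _)) // (leq_trans (size_scale_leq _ _)).
- by rewrite hornerD !hornerZ p2 q2 !mulr1 subrK.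
- apply: (le_trans (l1polyD _ _)); rewrite !l1polyZ !ger0_norm //.
  by apply: lerD; apply: ler_wpM2l.
- move=> x hx; rewrite hornerD !hornerZ; apply: (le_trans (ler_normD _ _)).
  rewrite !normrM (ger0_norm t0') (ger0_norm t0); apply: lerD; apply: ler_wpM2l => //; [exact: p4|exact: q4].
Qed.

Lemma rt_le rho k C r : 0 <= rho -> rho <= 1 -> Wit rho k C r -> rho_tilde rho k C <= r.
Proof.
move=> r0 r1 [p [p1 p2 p3 p4]].
apply: (@le_trans _ _ (supnorm_on rho p)); last exact: supnorm_le.
apply: ge_inf; last by exists p.
by exists 0 => _ [q [_ _ _ ->]]; apply: supnorm_ge0.
Qed.

End L1.

Section P2.
Variable R : realType.
Variables (rho : R) (k M : nat).
Hypothesis rho0 : 0 < rho.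
Hypothesis rho1 : rho < 1.
Hypothesis k0 : (0 < k)%N.

Lemma Wit_peps eps : 0 <= eps ->
  Wit rho k (l1poly (p_eps rho k eps)) (rate_of k (beta_of ((rho + eps) / (1 + eps)))).
Proof.
move=> e0; exists (p_eps rho k eps); split => //.
- exact: peps_size.
- exact: peps_one.
- by move=> x hx; apply: peps_bound.
Qed.

Lemma Wit0 : Wit rho k 1 (rho ^+ k).
Proof.
have r0 := rho0; exists 'X^k; split.
- by rewrite size_polyXn.
- by rewrite hornerXn expr1n.
- by rewrite l1polyXn.
- move=> x /andP [x0 xr]; rewrite hornerXn normrX ger0_norm //.
  by rewrite lerXn2r // ?nnegrE // ltW.
Qed.

Lemma Wit1 : Wit rho k ((2 + rho ^+ k) / (2 - rho ^+ k)) (rho ^+ k / (2 - rho ^+ k)).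
Proof.
have r0 := rho0; have r1 := rho1.
have hk0 : 0 <= rho ^+ k by rewrite exprn_ge0 // ltW.
have hk1 : rho ^+ k <= 1 by rewrite exprn_ile1 // ltW.
have hD : 0 < 2 - rho ^+ k by lra.
have hD' : 0 < (2 - rho ^+ k)^-1 by rewrite invr_gt0.
exists ((2 - rho ^+ k)^-1 *: ((2 : R) *: 'X^k - (rho ^+ k)%:P)); split.
- apply: (leq_trans (size_scale_leq _ _)); apply: (leq_trans (size_polyD _ _)).
  rewrite geq_max size_polyN size_polyC; apply/andP; split.
    by apply: (leq_trans (size_scale_leq _ _)); rewrite size_polyXn.
  by case: (_ != 0).
- rewrite hornerZ hornerD hornerN hornerZ hornerXn hornerC expr1n mulr1 mulVf //.
  by apply/negP => /eqP; lra.
- rewrite l1polyZ (ger0_norm (ltW hD')) [X in X <= _]mulrC; apply: ler_wpM2r; first exact: ltW.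
  apply: (le_trans (l1polyD _ _)); rewrite -scaleN1r !l1polyZ l1polyC l1polyXn.
  by rewrite normrN normr1 mul1r mulr1 !ger0_norm.
- move=> x /andP [x0 xr]; rewrite hornerZ hornerD hornerN hornerZ hornerXn hornerC.
  rewrite normrM (ger0_norm (ltW hD')) [X in X <= _]mulrC; apply: ler_wpM2r; first exact: ltW.
  have hx0 : 0 <= x ^+ k by rewrite exprn_ge0.
  have hx1 : x ^+ k <= rho ^+ k by rewrite lerXn2r // ?nnegrE // ltW.
  rewrite ler_norml; apply/andP; split; lra.
Qed.

Lemma Wit_j j : Wit rho k (Cs rho k M j) (rhos rho k M j).
Proof.
rewrite /Cs /rhos; case: j => [|[|j]] /=; [exact: Wit0|exact: Wit1|].
case: ifP => _.
  apply: Wit_peps; rewrite /eps_i divr_ge0 // ?exprn_ge0 // ltW //.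
rewrite /C_star /rho_star; have := Wit_peps (lexx 0); by rewrite !addr0 divr1.
Qed.


Lemma find_idx (f : nat -> R) C N : f 0%N <= C ->
  f N <= C \/ exists2 j, (j < N)%N & f j <= C < f j.+1.
Proof.
move=> h0; elim: N => [|N [IH|[j hj hj']]]; first by left.
- have [h|h] := leP (f N.+1) C; first by left.
  by right; exists N => //; rewrite IH h.
- by right; exists j => //; rewrite ltnS ltnW.
Qed.

Lemma part2 C : 1 <= C -> rho_tilde rho k C <= interp_bound rho k M C.
Proof.
move=> hC; have r0 := rho0; have r1 := rho1.
have hrt : forall C' r', Wit rho k C' r' -> C' <= C -> rho_tilde rho k C <= r'.
  by move=> C' r' hw hle; apply: rt_le; [exact: ltW|exact: ltW|exact: Wit_mono hw].
have [hM|[j hj /andP [h1 h2]]] := @find_idx (Cs rho k M) C M.+2 hC.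
  apply: (le_trans (hrt _ _ (Wit_j M.+2) hM)).
  have -> : rhos rho k M M.+2 = rho_star rho k by rewrite /rhos /= ltnn.
  exact: bigmax_ge_id.
set f := Cs rho k M in h1 h2 *; set g := rhos rho k M.
have hD : 0 < f j.+1 - f j by lra.
set t := (C - f j) / (f j.+1 - f j).
have ht : 0 <= t <= 1.
  apply/andP; split; first by rewrite divr_ge0 //; lra.
  by rewrite ler_pdivrMr // mul1r; lra.
have hw := Wit_conv ht (Wit_j j) (Wit_j j.+1).
have hDn : f j.+1 - f j != 0 by apply/negP => /eqP; lra.
have eC : (1 - t) * f j + t * f j.+1 = C.
  rewrite /t; field; by repeat (apply/andP; split).
rewrite eC in hw.
apply: (le_trans (hrt _ _ hw (lexx _))).
have -> : (1 - t) * g j + t * g j.+1 = interp rho k M j C.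
  rewrite /interp -/f -/g /t; field; by repeat (apply/andP; split).
rewrite /interp_bound; apply: (le_trans _ (le_bigmax (rho_star rho k) (fun j : 'I_M.+2 => Num.max (interp rho k M j C) (rho_star rho k)) (Ordinal hj))).
by rewrite /= le_max lexx.
Qed.

End P2.


Local Close Scope sesquilinear_scope.
Local Close Scope classical_set_scope.
Local Open Scope ring_scope.

Theorem proposition6 (R : realType) (n : nat) (rho alpha : R)
  (F : 'cV[R]_n -> 'cV[R]_n) (G : 'M[R]_n) (xi : 'cV[R]_n -> 'cV[R]_n)
  (C : R) (k : nat) (x0 : 'cV[R]_n) (c : 'cV[R]_k.+1) :
  (0 < n)%N -> 0 < rho < 1 -> 0 <= alpha ->
  lipschitz rho F ->
  (forall x, F x = G *m x + xi x) ->
  symmetric_mx G -> psd G -> loewner_le G (rho%:M) ->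
  lipschitz alpha xi ->
  1 <= C -> (2 < k)%N ->
  caa_argmin F x0 C c ->
  let xe := caa_output F x0 c in
  let rho_hat := rho_tilde rho k C + 3%:R * alpha * k%:R * C in
  enorm (F xe - xe) <= rho_hat * enorm (F x0 - x0) /\
  (forall M : nat, (0 < M)%N ->
     rho_hat <= interp_bound rho k M C + 3%:R * alpha * k%:R * C).
Proof.
move=> hn /andP [r0 r1] a0 hFL hFG hGs hGp hGl hxiL hC hk hc xe rho_hat.
split.
  apply: (part1 (ltW r0) (ltW r1) a0 hFL hFG hGs hGp hGl hxiL hC hc).
move=> M hM; rewrite /rho_hat lerD2r.
by apply: part2.
Qed.
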